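(* Let $\mathfrak a$ be a Euclidean space of dimension $n$, $\Phi\subset\mathfrak a^*$ a (possibly non-reduced) root system with a chosen ordering, positive roots $\Phi^+$ and simple roots $\alpha_1,\dots,\alpha_n$; let $\omega_1,\dots,\omega_n\in\mathfrak a$ be defined by $\alpha_i(\omega_j)=\delta_{ij}$, let $\mathfrak a_+=\{\mathbf z\in\mathfrak a:\alpha_i(\mathbf z)\ge0\ \forall i\}$, and let $\rho=\sum_{\alpha\in\Phi^+}\alpha=\sum_{i=1}^nk_i\alpha_i$ (with $k_i>0$). Put $k=\min_{1\le i\le n}k_i/\|\omega_i\|$. Then there exist $C_1,C_2>0$ such that for all $z>0$, $$C_1\le\frac{\int_{\{\mathbf z\in\mathfrak a_+:\|\mathbf z\|\ge z\}}e^{-\rho(\mathbf z)}\,d\mathbf z}{e^{-kz}}\le C_2.$$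
   Context: $\|\cdot\|$ is the Euclidean norm on $\mathfrak a$ and $d\mathbf z$ is Lebesgue measure on $\mathfrak a$. *)

(* Defs.v *)
From HB Require Import structures.
From mathcomp Require Import all_boot all_order all_algebra.
From mathcomp Require Import all_classical all_reals all_analysis.
Set Implicit Arguments. Unset Strict Implicit. Unset Printing Implicit Defensive.
Import Order.TTheory GRing.Theory Num.Theory.
Local Open Scope ring_scope.

(* The Euclidean space a of dimension n is modelled as 'rV[R]_n with the
   standard inner product; a* is identified with a via this inner product. *)
Definition dotv (R : realType) (n : nat) (u v : 'rV[R]_n) : R :=
  \sum_(i < n) u 0 i * v 0 i.

Definition eucl_norm (R : realType) (n : nat) (v : 'rV[R]_n) : R :=
  Num.sqrt (dotv v v).

Definition cartan (R : realType) (n : nat) (b a : 'rV[R]_n) : R :=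
  2 * dotv b a / dotv a a.

(* (possibly non-reduced) crystallographic root system in R^n,
   given as a duplicate-free list of vectors *)
Definition is_root_system (R : realType) (n : nat) (Phi : seq 'rV[R]_n) : Prop :=
  [/\ uniq Phi,
      (0 : 'rV[R]_n) \notin Phi,
      \rank (\matrix_(i < size Phi) Phi`_i) = n,
      (forall a b, a \in Phi -> b \in Phi -> b - cartan b a *: a \in Phi) &
      (forall a b, a \in Phi -> b \in Phi -> cartan b a \is a Num.int)].

Definition simple_mx (R : realType) (n : nat) (alpha : 'I_n -> 'rV[R]_n) : 'M[R]_n :=
  \matrix_(i < n) alpha i.

Definition coords (R : realType) (n : nat) (alpha : 'I_n -> 'rV[R]_n) (v : 'rV[R]_n)
  : 'I_n -> R := fun i => (v *m invmx (simple_mx alpha)) 0 i.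

Definition is_base (R : realType) (n : nat) (Phi : seq 'rV[R]_n)
  (alpha : 'I_n -> 'rV[R]_n) : Prop :=
  [/\ (forall i, alpha i \in Phi),
      simple_mx alpha \in unitmx &
      (forall b, b \in Phi ->
         (forall i, coords alpha b i \is a Num.int) /\
         ((forall i, 0 <= coords alpha b i) \/ (forall i, coords alpha b i <= 0)))].

Definition positive_root (R : realType) (n : nat) (alpha : 'I_n -> 'rV[R]_n)
  (b : 'rV[R]_n) : bool := [forall i, 0 <= coords alpha b i].

(* rho = sum of the positive roots (no factor 1/2, as in the paper) *)
Definition rho_sum (R : realType) (n : nat) (Phi : seq 'rV[R]_n)
  (alpha : 'I_n -> 'rV[R]_n) : 'rV[R]_n :=
  \sum_(b <- Phi | positive_root alpha b) b.

(* Lebesgue integral over R^n of a nonnegative function, as the iterated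
   Lebesgue integral over the coordinates (Tonelli). *)
Fixpoint iter_integral (R : realType) (n : nat) : ('rV[R]_n -> \bar R) -> \bar R :=
  match n return ('rV[R]_n -> \bar R) -> \bar R with
  | 0 => fun f => f 0
  | m.+1 => fun f =>
      (\int[@lebesgue_measure R]_(x in [set: R])
         iter_integral (fun v : 'rV[R]_m => f (row_mx (const_mx x : 'rV[R]_1) v)))%E
  end.

Definition chamber (R : realType) (n : nat) (alpha : 'I_n -> 'rV[R]_n) : set 'rV[R]_n :=
  [set x | forall i, 0 <= dotv (alpha i) x].

Definition tail_integral (R : realType) (n : nat) (Phi : seq 'rV[R]_n)
  (alpha : 'I_n -> 'rV[R]_n) (z : R) : \bar R :=
  iter_integral (fun x : 'rV[R]_n =>
    if `[< chamber alpha x /\ z <= eucl_norm x >]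
    then (expR (- dotv (rho_sum Phi alpha) x))%:E else 0%E).

(* Main.v *)
Require Import Defs.
From HB Require Import structures.
From mathcomp Require Import all_boot all_order all_algebra.
From mathcomp Require Import all_classical all_reals all_analysis.
From mathcomp Require Import measurable_realfun.
From mathcomp Require Import ring lra.
Import Order.TTheory GRing.Theory Num.Theory.
Local Open Scope ring_scope.
Section Geo.
Variable R : realType.
Variable n : nat.
Implicit Types u v w : 'rV[R]_n.
Local Notation "u ⋅ v" := (dotv u v) (at level 40).
Local Notation nrm := (@eucl_norm R n).

Lemma dotvC u v : u ⋅ v = v ⋅ u.
Proof. by apply: eq_bigr => i _; rewrite mulrC. Qed.

Lemma dotvDl u v w : (u + v) ⋅ w = u ⋅ w + v ⋅ w.
Proof. by rewrite /dotv -big_split; apply: eq_bigr => i _; rewrite mxE mulrDl. Qed.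

Lemma dotvZl (a : R) u w : (a *: u) ⋅ w = a * (u ⋅ w).
Proof. by rewrite /dotv mulr_sumr; apply: eq_bigr => i _; rewrite mxE mulrA. Qed.

Lemma dotvNl u w : (- u) ⋅ w = - (u ⋅ w).
Proof. by rewrite -scaleN1r dotvZl mulN1r. Qed.

Lemma dotvBl u v w : (u - v) ⋅ w = u ⋅ w - v ⋅ w.
Proof. by rewrite dotvDl dotvNl. Qed.

Lemma dotv0l w : (0 : 'rV[R]_n) ⋅ w = 0.
Proof. by rewrite /dotv big1 // => i _; rewrite mxE mul0r. Qed.

Lemma dotv_suml (I : Type) (r : seq I) (P : pred I) (F : I -> 'rV[R]_n) w :
  (\sum_(i <- r | P i) F i) ⋅ w = \sum_(i <- r | P i) (F i ⋅ w).
Proof.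
elim/big_rec2: _ => [|i y1 y2 _ <-]; first exact: dotv0l.
by rewrite dotvDl.
Qed.

Lemma dotvDr u v w : w ⋅ (u + v) = w ⋅ u + w ⋅ v.
Proof. by rewrite dotvC dotvDl dotvC [v ⋅ _]dotvC. Qed.
Lemma dotvZr (a : R) u w : w ⋅ (a *: u) = a * (w ⋅ u).
Proof. by rewrite dotvC dotvZl dotvC. Qed.
Lemma dotvBr u v w : w ⋅ (u - v) = w ⋅ u - w ⋅ v.
Proof. by rewrite dotvC dotvBl dotvC [v ⋅ _]dotvC. Qed.
Lemma dotv_sumr (I : Type) (r : seq I) (P : pred I) (F : I -> 'rV[R]_n) w :
  w ⋅ (\sum_(i <- r | P i) F i) = \sum_(i <- r | P i) (w ⋅ F i).
Proof. by rewrite dotvC dotv_suml; apply: eq_bigr => i _; rewrite dotvC. Qed.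

Lemma dotvv_ge0 v : 0 <= v ⋅ v.
Proof. by apply: sumr_ge0 => i _; rewrite -expr2 sqr_ge0. Qed.

Lemma dotvv_eq0 v : v ⋅ v = 0 -> v = 0.
Proof.
move=> /eqP; rewrite /dotv psumr_eq0; last by move=> i _; rewrite -expr2 sqr_ge0.
move=> /allP H; apply/rowP => i; rewrite mxE.
have := H i (mem_index_enum i); rewrite -expr2 sqrf_eq0 => /eqP //.
Qed.

Lemma norm_ge0 v : 0 <= (nrm v).
Proof. exact: sqrtr_ge0. Qed.

Lemma norm_sq v : (nrm v) ^+ 2 = v ⋅ v.
Proof. by rewrite sqr_sqrtr // dotvv_ge0. Qed.

Lemma norm_eq0 v : (nrm v) = 0 -> v = 0.
Proof. by move=> H; apply: dotvv_eq0; rewrite -norm_sq H expr0n. Qed.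

Lemma norm_le u v : u ⋅ u <= v ⋅ v -> (nrm u) <= (nrm v).
Proof. by move=> H; rewrite /eucl_norm ler_sqrt // dotvv_ge0. Qed.

Lemma CS u v : u ⋅ v <= (nrm u) * (nrm v).
Proof.
have [u0|unz] := eqVneq (nrm u) 0.
  by rewrite u0 mul0r (norm_eq0 _ u0) dotv0l.
have [v0|vnz] := eqVneq (nrm v) 0.
  by rewrite v0 mulr0 (norm_eq0 _ v0) dotvC dotv0l.
have up : 0 < (nrm u) by rewrite lt0r unz norm_ge0.
have vp : 0 < (nrm v) by rewrite lt0r vnz norm_ge0.
have H := dotvv_ge0 (nrm v *: u - nrm u *: v).
rewrite !(dotvBl, dotvBr, dotvZl, dotvZr) -!norm_sq (dotvC v u) in H.
have H2 : (u ⋅ v) * (2 * (nrm u) * (nrm v)) <= ((nrm u) * (nrm v)) * (2 * (nrm u) * (nrm v)).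
  by nra.
rewrite ler_pM2r in H2 => //.
by rewrite !mulr_gt0.
Qed.


Lemma normD u v : nrm (u + v) <= nrm u + nrm v.
Proof.
rewrite -(@ler_pXn2r _ 2) ?nnegrE ?addr_ge0 ?norm_ge0 //.
rewrite norm_sq dotvDl !dotvDr (dotvC v u) sqrrD -!norm_sq.
have := CS u v; have := norm_ge0 u; have := norm_ge0 v; nra.
Qed.

Lemma normZ (a : R) v : nrm (a *: v) = `|a| * nrm v.
Proof.
rewrite /eucl_norm dotvZl dotvZr mulrA -expr2 sqrtrM ?sqr_ge0 //.
by rewrite sqrtr_sqr.
Qed.

Lemma normN v : nrm (- v) = nrm v.
Proof. by rewrite -scaleN1r normZ normrN1 mul1r. Qed.

Lemma normB u v : nrm (u - v) <= nrm u + nrm v.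
Proof. by rewrite -(normN v); apply: normD. Qed.

Lemma norm_sum (I : Type) (r : seq I) (P : pred I) (F : I -> 'rV[R]_n) :
  nrm (\sum_(i <- r | P i) F i) <= \sum_(i <- r | P i) nrm (F i).
Proof.
elim/big_rec2: _ => [|i y1 y2 _ IH].
  by rewrite /eucl_norm dotv0l sqrtr0.
exact: le_trans (normD _ _) (lerD (lexx _) IH).
Qed.

Lemma coord_le_norm v m : `|v 0 m| <= nrm v.
Proof.
rewrite -(@ler_pXn2r _ 2) ?nnegrE ?norm_ge0 // norm_sq real_normK ?num_real //.
rewrite /dotv (bigD1 m) //= -[X in X <= _]addr0 -expr2 lerD2l.
by apply: sumr_ge0 => i _; rewrite -expr2 sqr_ge0.
Qed.

Lemma sum_coord_le v : \sum_(m < n) `|v 0 m| <= n%:R * nrm v.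
Proof.
rewrite [X in _ <= X](_ : _ = \sum_(m < n) nrm v); last by rewrite sumr_const card_ord mulr_natl.
by apply: ler_sum => m _; apply: coord_le_norm.
Qed.

Section Dual.
Variables (alpha omega : 'I_n -> 'rV[R]_n).
Hypothesis dual : forall i j, alpha i ⋅ omega j = (i == j)%:R.
Hypothesis unitA : simple_mx alpha \in unitmx.

Lemma sum_delta (c : 'I_n -> R) j : \sum_(i < n) c i * (i == j)%:R = c j.
Proof.
rewrite (bigD1 j) //= eqxx mulr1 big1 ?addr0 // => i /negbTE ->; by rewrite mulr0.
Qed.

Lemma sum_delta2 (c : 'I_n -> R) j : \sum_(i < n) c i * (j == i)%:R = c j.
Proof. by rewrite -[RHS](sum_delta c); apply: eq_bigr => i _; rewrite eq_sym. Qed.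

Lemma decomp x : x = \sum_(j < n) (alpha j ⋅ x) *: omega j.
Proof.
apply/eqP; rewrite -subr_eq0; apply/eqP.
set y := x - _.
have hy : forall i, alpha i ⋅ y = 0.
  move=> i; rewrite /y dotvBr dotv_sumr.
  under eq_bigr => j _ do rewrite dotvZr dual.
  by rewrite sum_delta2 subrr.
have H : simple_mx alpha *m y^T = 0.
  apply/matrixP => i j; transitivity (alpha i ⋅ y); last by rewrite hy mxE.
  rewrite mxE /dotv.
  by apply: eq_bigr => m _; rewrite !mxE ord1.
apply: trmx_inj; rewrite trmx0.
by rewrite -(mulKmx unitA (y^T)) H mulmx0.
Qed.

Lemma coordsE v : v = \sum_(j < n) coords alpha v j *: alpha j.
Proof.
rewrite -{1}(mulmxKV unitA v) mulmx_sum_row.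
by apply: eq_bigr => j _; rewrite rowK.
Qed.

Lemma coords_dot v i : coords alpha v i = v ⋅ omega i.
Proof.
rewrite [in RHS](coordsE v) dotv_suml.
under eq_bigr => j _ do rewrite dotvZl dual.
by rewrite sum_delta.
Qed.

End Dual.

Lemma abs_dot_le v (y : 'rV[R]_n) : (forall m, `|y 0 m| <= 1) -> `|v ⋅ y| <= \sum_(m < n) `|v 0 m|.
Proof.
move=> hy; rewrite /dotv; apply: le_trans (ler_norm_sum _ _ _) _.
apply: ler_sum => m _; rewrite normrM -[X in _ <= X]mulr1.
by apply: ler_wpM2l => //.
Qed.

Lemma subr_ge0_of (a b : R) : a <= b -> 0 <= b - a.
Proof. by rewrite subr_ge0. Qed.

Section Main.
Variables (alpha omega : 'I_n -> 'rV[R]_n).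
Hypothesis dual : forall i j, alpha i ⋅ omega j = (i == j)%:R.
Hypothesis unitA : simple_mx alpha \in unitmx.

Lemma omega_neq0 j : 0 < nrm (omega j).
Proof.
rewrite lt0r norm_ge0 andbT; apply/eqP => /norm_eq0 H.
by move: (dual j j); rewrite H dotvC dotv0l eqxx => /eqP; rewrite eq_sym oner_eq0.
Qed.

Definition ee j := (nrm (omega j))^-1 *: omega j.

Lemma ee_norm j : ee j ⋅ ee j = 1.
Proof.
rewrite /ee dotvZl dotvZr -norm_sq mulrA -expr2 -exprMn mulVf ?expr1n //.
exact: lt0r_neq0 (omega_neq0 j).
Qed.

Lemma ee_lt1 j l : j != l -> ee j ⋅ ee l < 1.
Proof.
move=> jl; rewrite ltNge; apply/negP => H.
have H2 : (ee j - ee l) ⋅ (ee j - ee l) <= 0.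
  by rewrite !(dotvBl, dotvBr) !ee_norm (dotvC (ee l)); lra.
have H3 : ee j - ee l = 0.
  by apply: dotvv_eq0; apply/eqP; rewrite eq_le H2 dotvv_ge0.
have : alpha l ⋅ ee j = alpha l ⋅ ee l by move/eqP: H3; rewrite subr_eq0 => /eqP ->.
rewrite /ee !dotvZr !dual eqxx eq_sym (negbTE jl) mulr0 mulr1 => /esym/eqP.
by rewrite invr_eq0 (negbTE (lt0r_neq0 (omega_neq0 l))).
Qed.

Definition gg := \big[Num.max/0]_(p : 'I_n * 'I_n | p.1 != p.2) (ee p.1 ⋅ ee p.2).

Lemma gg_ge0 : 0 <= gg.
Proof. by rewrite /gg; elim/big_rec: _ => // i acc _ h; rewrite le_max h orbT. Qed.

Lemma gg_lt1 : gg < 1.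
Proof. by apply: bigmax_lt => // p /ee_lt1. Qed.

Lemma ee_le_gg j l : ee j ⋅ ee l <= gg + (1 - gg) * (j == l)%:R.
Proof.
have [->|jl] := eqVneq j l; first by rewrite ee_norm mulr1 addrC subrK.
rewrite mulr0 addr0.
exact: (@le_bigmax_cond _ _ _ 0 (j, l) (fun p : 'I_n * 'I_n => p.1 != p.2) (fun p => ee p.1 ⋅ ee p.2) jl).
Qed.


Variables (rho : 'rV[R]_n) (kk : 'I_n -> R) (k : R).
Hypothesis hrho : rho = \sum_(i < n) kk i *: alpha i.
Hypothesis hk : forall i, k <= kk i / nrm (omega i).
Hypothesis kpos : 0 < k.
Hypothesis n0 : (0 < n)%N.

Lemma rho_dot x : rho ⋅ x = \sum_(j < n) kk j * (alpha j ⋅ x).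
Proof. by rewrite hrho dotv_suml; apply: eq_bigr => j _; rewrite dotvZl. Qed.

Lemma nrm_ee j : nrm (ee j) = 1.
Proof. by rewrite /eucl_norm ee_norm sqrtr1. Qed.

Lemma upper_pt x z : (forall j, 0 <= alpha j ⋅ x) -> z <= nrm x ->
  exists i, (k * (1 - gg) / 5) * nrm (x - z *: ee i) <= rho ⋅ x - k * z.
Proof.
move=> hxc hz.
pose t j := alpha j ⋅ x.
pose a j := nrm (omega j).
pose u j := t j * a j.
have a0 : forall j, 0 < a j by move=> j; exact: omega_neq0.
have u0 : forall j, 0 <= u j by move=> j; apply: mulr_ge0; [exact: hxc | exact: ltW].
have hx : x = \sum_(j < n) u j *: ee j.
  rewrite {1}(@decomp alpha omega dual unitA x); apply: eq_bigr => j _.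
  by rewrite /ee scalerA /u /a mulrK // unitfE lt0r_neq0 //; exact: omega_neq0.
pose L := \sum_(j < n) u j.
have [i _ imax] := @arg_maxP _ _ 'I_n (Ordinal n0) xpredT u isT.
pose M := u i.
have uM : forall j, u j <= M by move=> j; exact: imax.
have hA : k * L <= rho ⋅ x.
  rewrite rho_dot /L mulr_sumr; apply: ler_sum => j _.
  rewrite /u /t mulrA mulrAC; apply: ler_wpM2r; first exact: hxc.
  by rewrite /a -ler_pdivlMr; [exact: hk | exact: omega_neq0].
have LM : L = M + \sum_(j < n | j != i) u j by rewrite /L (bigD1 i).
have rest0 : 0 <= \sum_(j < n | j != i) u j by apply: sumr_ge0.
have S2 : \sum_(j < n) u j * u j <= M * L.
  rewrite /L mulr_sumr; apply: ler_sum => j _; apply: ler_wpM2r => //.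
have xx : x ⋅ x <= gg * L ^+ 2 + (1 - gg) * (\sum_(j < n) u j * u j).
  have inner : forall j, \sum_(l < n) u j * u l * (gg + (1 - gg) * (j == l)%:R)
      = gg * L * u j + (1 - gg) * (u j * u j).
    move=> j.
    transitivity (\sum_(l < n) (gg * u j * u l + (1 - gg) * (u j * u l) * (j == l)%:R)).
      by apply: eq_bigr => l _; ring.
    rewrite big_split /= -mulr_sumr (sum_delta2 (fun l => (1 - gg) * (u j * u l))).
    by rewrite /L; ring.
  rewrite [in X in X ⋅ _]hx [in X in _ ⋅ X]hx dotv_suml.
  apply: (@le_trans _ _ (\sum_(j < n) \sum_(l < n) u j * u l * (gg + (1 - gg) * (j == l)%:R))).
    apply: ler_sum => j _; rewrite dotv_sumr; apply: ler_sum => l _.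
    rewrite dotvZl dotvZr mulrA; apply: ler_wpM2l; first exact: mulr_ge0.
    exact: ee_le_gg.
  under eq_bigr => j _ do rewrite inner.
  rewrite big_split /= -!mulr_sumr.
  by rewrite -/L expr2 mulrA.
have M0 : 0 <= M by exact: u0.
have ML : M <= L by rewrite LM lerDl.
have g0 := gg_ge0; have g1 := gg_lt1.
have nx0 := norm_ge0 x.
have nxx : nrm x ^+ 2 = x ⋅ x by exact: norm_sq.
have Lx : nrm x <= L.
  have : nrm x ^+ 2 <= L ^+ 2.
    rewrite nxx; apply: le_trans xx _.
    have SL : \sum_(j < n) u j * u j <= L ^+ 2.
      apply: le_trans S2 _; rewrite expr2; apply: ler_wpM2r => //; exact: le_trans M0 ML.
    have h1 : 0 <= 1 - gg by lra.
    have := mulr_ge0 h1 (subr_ge0_of _ _ SL); nra.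
  have L0 : 0 <= L by exact: le_trans M0 ML.
  by move=> H; rewrite -(@ler_pXn2r _ 2) ?nnegrE.
have L0 : 0 <= L by exact: le_trans M0 ML.
have key : (1 - gg) * (L - M) <= 2 * (L - nrm x).
  have [Lz|Lp] := eqVneq L 0.
    have M00 : M = 0 by lra.
    have : nrm x <= 0 by lra.
    nra.
  have Lpos : 0 < L by rewrite lt0r Lp L0.
  rewrite -(ler_pM2r Lpos).
  have h1 : 0 <= 1 - gg by lra.
  have e1 := ler_wpM2l h1 (lerB (lexx (L ^+ 2)) S2).
  have e2 : (L - nrm x) * (L + nrm x) <= (L - nrm x) * (2 * L).
    by apply: ler_wpM2l; [rewrite subr_ge0 | lra].
  nra.
have hN : nrm (x - z *: ee i) <= `|M - z| + (L - M).
  have -> : x - z *: ee i = (M - z) *: ee i + \sum_(j < n | j != i) u j *: ee j.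
    by rewrite {1}hx (bigD1 i) //= addrAC -scalerBl.
  apply: le_trans (normD _ _) _; rewrite normZ nrm_ee mulr1 lerD2l.
  apply: le_trans (norm_sum _ _ _ _) _.
  rewrite LM addrAC subrr add0r; apply: ler_sum => j _.
  by rewrite normZ nrm_ee mulr1 ger0_norm.
have hMz : `|M - z| <= (L - z) + (L - M).
  have zL : z <= L by exact: le_trans hz Lx.
  by rewrite ler_norml; apply/andP; split; lra.
exists i.
have h1 : 0 <= 1 - gg by lra.
have h2 : 1 - gg <= 1 by lra.
have D1 : k * (L - z) <= rho ⋅ x - k * z by lra.
have D2 : k * (1 - gg) * (L - M) <= 2 * (rho ⋅ x - k * z).
  have : k * nrm x >= k * z by apply: ler_wpM2l => //; exact: ltW.
  have := ler_wpM2l (ltW kpos) key. nra.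
have N0 := norm_ge0 (x - z *: ee i).
have hN2 : nrm (x - z *: ee i) <= (L - z) + 2 * (L - M) by lra.
have eps0 : 0 <= k * (1 - gg) / 5 by apply: divr_ge0 => //; apply: mulr_ge0 => //; exact: ltW.
apply: le_trans (ler_wpM2l eps0 hN2) _.
have A0 : 0 <= L - z by lra.
have := mulr_ge0 (ltW kpos) A0.
have := ler_wpM2l (mulr_ge0 (ltW kpos) A0) h2.
nra.
Qed.


Definition S1 (v : 'rV[R]_n) := \sum_(m < n) `|v 0 m|.

Lemma S1_ge0 v : 0 <= S1 v.
Proof. by apply: sumr_ge0. Qed.

Lemma lower_pt i0 : k = kk i0 / nrm (omega i0) ->
  exists (x0 : R -> 'rV[R]_n) (C : R), forall z (x : 'rV[R]_n), 0 < z ->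
    (forall m, `|x 0 m - x0 z 0 m| <= 1) ->
    [/\ forall j, 0 <= alpha j ⋅ x, z <= nrm x & rho ⋅ x <= k * z + C].
Proof.
move=> hi0.
pose W := \sum_(j < n) omega j.
pose lam := \sum_(j < n) S1 (alpha j).
pose a := nrm (omega i0).
have a0 : 0 < a by exact: omega_neq0.
pose M0 := (lam * `|omega i0 ⋅ W| + S1 (omega i0)) / a ^+ 2.
pose s z := z / a + M0.
exists (fun z => s z *: omega i0 + lam *: W).
exists (M0 * kk i0 + lam * `|rho ⋅ W| + S1 rho).
move=> z x z0 hx.
pose y := x - (s z *: omega i0 + lam *: W).
have hy : forall m, `|y 0 m| <= 1 by move=> m; rewrite /y !mxE; have := hx m; rewrite !mxE.
have ex : x = s z *: omega i0 + lam *: W + y by rewrite /y addrC subrK.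
clearbody y.
have lam0 : 0 <= lam by apply: sumr_ge0 => j _; exact: S1_ge0.
have M00 : 0 <= M0.
  apply: divr_ge0; last exact: exprn_ge0 (ltW a0).
  by apply: addr_ge0; [apply: mulr_ge0 | exact: S1_ge0].
have s0 : 0 <= s z by apply: addr_ge0 => //; apply: divr_ge0 => //; exact: ltW.
have dotW : forall j, alpha j ⋅ W = 1.
  move=> j; rewrite /W dotv_sumr; under eq_bigr => l _ do rewrite dual.
  by rewrite (bigD1 j) //= eqxx big1 ?addr0 // => l /negbTE; rewrite eq_sym => ->.
split.
- move=> j; rewrite ex !dotvDr !dotvZr dotW dual mulr1.
  have h1 : S1 (alpha j) <= lam.
    by rewrite /lam (bigD1 j) //= lerDl; apply: sumr_ge0 => l _; exact: S1_ge0.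
  have h2 := abs_dot_le (alpha j) y hy.
  have h3 : 0 <= s z * (j == i0)%:R by apply: mulr_ge0.
  move: h2; rewrite ler_norml => /andP[h2 _].
  rewrite -/(S1 (alpha j)) in h2.
  lra.
- have h : a * z <= omega i0 ⋅ x.
    rewrite ex !dotvDr !dotvZr -norm_sq -/a.
    have h2 := abs_dot_le (omega i0) y hy.
    move: h2; rewrite ler_norml => /andP[h2 _]; rewrite -/(S1 (omega i0)) in h2.
    have h4 : lam * (omega i0 ⋅ W) >= - (lam * `|omega i0 ⋅ W|).
      by rewrite -mulrN; apply: ler_wpM2l => //; rewrite lerNl -normrN ler_norm.
    have h5 : s z * a ^+ 2 = a * z + (lam * `|omega i0 ⋅ W| + S1 (omega i0)).
      have an : a != 0 by exact: lt0r_neq0.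
      by rewrite /s /M0; field.
    lra.
  have := le_trans h (CS _ _); rewrite -/a.
  by rewrite ler_pM2l.
- rewrite ex !dotvDr !dotvZr.
  have hr : rho ⋅ omega i0 = kk i0.
    rewrite rho_dot; under eq_bigr => j _ do rewrite dual.
    by rewrite (bigD1 i0) //= eqxx mulr1 big1 ?addr0 // => l /negbTE ->; rewrite mulr0.
  rewrite hr.
  have h2 := abs_dot_le rho y hy.
  move: h2; rewrite ler_norml => /andP[_ h2]; rewrite -/(S1 rho) in h2.
  have h4 : lam * (rho ⋅ W) <= lam * `|rho ⋅ W|.
    by apply: ler_wpM2l => //; exact: ler_norm.
  have h5 : s z * kk i0 = k * z + M0 * kk i0.
    have an : a != 0 by exact: lt0r_neq0.
    by rewrite /s hi0 -/a; field.
  lra.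
Qed.
End Main.
End Geo.
Import numFieldTopology.Exports numFieldNormedType.Exports.

Section MeasA.
Variable R : realType.
Local Notation mu := (@lebesgue_measure R).
Local Open Scope ereal_scope.
Local Open Scope ring_scope.
Local Open Scope ereal_scope.

Lemma int_mono (f g : R -> \bar R) : (forall x, 0 <= f x) -> (forall x, f x <= g x) ->
  \int[mu]_(x in [set: R]) f x <= \int[mu]_(x in [set: R]) g x.
Proof.
move=> f0 fg.
have g0 : forall x, 0 <= g x by move=> x; exact: le_trans (f0 x) (fg x).
rewrite !ge0_integralTE//.
apply: ge_ereal_sup => _ [h /= hf <-].
apply: ereal_sup_ubound; exists h => //= x; exact: le_trans (hf x) (fg x).
Qed.

Lemma iter_ge0 n (f : 'rV[R]_n -> \bar R) : (forall x, 0 <= f x) -> 0 <= iter_integral f.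
Proof.
elim: n f => [|n IH] f f0 /=; first exact: f0.
by apply: integral_ge0 => x _; apply: IH.
Qed.

Lemma iter_mono n (f g : 'rV[R]_n -> \bar R) : (forall x, 0 <= f x) -> (forall x, f x <= g x) ->
  iter_integral f <= iter_integral g.
Proof.
elim: n f g => [|n IH] f g f0 fg /=; first exact: fg.
apply: int_mono => x; first by apply: iter_ge0.
by apply: IH.
Qed.

Lemma row_mx_ord0 n (c : R) (v : 'rV[R]_n) :
  (row_mx (const_mx c : 'rV[R]_1) v : 'rV[R]_n.+1) ord0 ord0 = c.
Proof.
rewrite /row_mx mxE; case: splitP => j /=.
  by rewrite mxE.
by [].
Qed.

Lemma row_mx_lift n (c : R) (v : 'rV[R]_n) (m : 'I_n) :
  (row_mx (const_mx c : 'rV[R]_1) v : 'rV[R]_n.+1) ord0 (lift ord0 m) = v ord0 m.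
Proof.
rewrite /row_mx mxE; case: splitP => j /=.
  by rewrite ord1.
by rewrite /bump /= => /eqP; rewrite eqSS => /eqP Hj; congr (v _ _); apply: ord_inj.
Qed.

Lemma iter_prod n N (w : 'I_N -> R) (h : 'I_N -> 'I_n -> R -> R) (r : 'I_N -> 'I_n -> R) :
  (forall i, (0 <= w i)%R) ->
  (forall i m x, (0 <= h i m x)%R) ->
  (forall i m, measurable_fun [set: R] (h i m)) ->
  (forall i m, \int[mu]_(x in [set: R]) (h i m x)%:E = (r i m)%:E) ->
  iter_integral (fun x : 'rV[R]_n => (\sum_(i < N) w i * \prod_(m < n) h i m (x ord0 m))%:E)
  = (\sum_(i < N) w i * \prod_(m < n) r i m)%:E.
Proof.
elim: n w h r => [|n IH] w h r w0 h0 hm hr /=.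
  by congr EFin; apply: eq_bigr => i _; rewrite !big_ord0.
transitivity (\int[mu]_(c in [set: R])
   (\sum_(i < N) (w i * \prod_(m < n) r i (lift ord0 m)) * h i ord0 c)%:E).
  apply: eq_integral => c _.
  rewrite (_ : (fun v : 'rV[R]_n => _) = (fun v : 'rV[R]_n =>
     (\sum_(i < N) (w i * h i ord0 c) * \prod_(m < n) h i (lift ord0 m) (v ord0 m))%:E)).
    rewrite (IH (fun i => w i * h i ord0 c)%R (fun i m => h i (lift ord0 m)) (fun i m => r i (lift ord0 m))) //.
    - by congr EFin; apply: eq_bigr => i _; rewrite mulrAC.
    - by move=> i; apply: mulr_ge0.
  apply/funext => v; congr EFin; apply: eq_bigr => i _.
  rewrite big_ord_recl row_mx_ord0 mulrA; congr (_ * _)%R; apply: eq_bigr => m _.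
  by rewrite row_mx_lift.
rewrite (_ : (fun c => _) = (fun c => \sum_(i < N) ((w i * \prod_(m < n) r i (lift ord0 m))%:E * (h i ord0 c)%:E))); last first.
  by apply/funext => c; rewrite -sumEFin; apply: eq_bigr => i _; rewrite EFinM.
rewrite ge0_integral_sum //; last first.
- by move=> i c _; rewrite -EFinM lee_fin; apply: mulr_ge0 => //; apply: mulr_ge0 => //;
    apply: prodr_ge0 => m _; rewrite -lee_fin -(hr i (lift ord0 m)); apply: integral_ge0 => x _; rewrite lee_fin.
- by move=> i; apply: measurable_funeM; apply/measurable_EFinP; exact: hm.
rewrite -sumEFin; apply: eq_bigr => i _.
have P0 : (0 <= w i * \prod_(m < n) r i (lift ord0 m))%R.
  apply: mulr_ge0 => //; apply: prodr_ge0 => m _.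
  by rewrite -lee_fin -(hr i (lift ord0 m)); apply: integral_ge0 => x _; rewrite lee_fin.
rewrite ge0_integralZl_EFin //; last first.
- by apply/measurable_EFinP; exact: hm.
- by move=> x _; rewrite lee_fin.
by rewrite hr -EFinM big_ord_recl mulrAC mulrA.
Qed.
End MeasA.
Section MeasB.
Variable R : realType.
Local Notation mu := (@lebesgue_measure R).
Local Open Scope ereal_scope.

Lemma cont_expNa (a : R) : continuous (fun z : R => expR (- (a * z)))%R.
Proof.
move=> z; apply: continuous_comp; last exact: continuous_expR.
by apply: (@continuousN _ R^o); apply: continuousM => //; exact: cst_continuous.
Qed.

Lemma int_exp_half (a : R) : (0 < a)%R ->
  \int[mu]_(x in `[0%R, +oo[) (expR (- (a * x)))%:E = (a^-1)%:E.
Proof.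
move=> a0.
have := integral_exponential_pdf a0.
rewrite /exponential_pdf.
have -> : (fun x => (((fun x0 : R => a * expR (- a * x0)) \_ `[0%R, +oo[) x)%:E)
   = ((fun x : R => (a * expR (- (a * x)))%:E) \_ `[0%R, +oo[).
  apply/funext => x; rewrite /patch; case: ifP => _ //.
  by rewrite mulNr.
rewrite -integral_mkcond.
have mD : measurable (`[0%R, +oo[ : set R) by [].
rewrite (_ : (fun x => (a * expR (- (a * x)))%:E) = (fun x => a%:E * (expR (- (a * x)))%:E)); last first.
  by apply/funext => x; rewrite EFinM.
have mf : measurable_fun (`[0%R, +oo[ : set R) (fun x : R => (expR (- (a * x)))%:E).
  apply/measurable_EFinP; apply: measurable_funTS.
  exact: continuous_measurable_fun (cont_expNa a).
rewrite ge0_integralZl_EFin //; last exact: ltW.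
have ge0 : 0 <= \int[mu]_(x in `[0%R, +oo[) (expR (- (a * x)))%:E.
  by apply: integral_ge0 => x _; rewrite lee_fin expR_ge0.
move: ge0; case: (\int[mu]_(x in _) _) => // [r|] _ H.
  move: H => [] H; congr EFin.
  by apply: (mulfI (lt0r_neq0 a0)); rewrite H mulfV // lt0r_neq0.
by move: H; rewrite gt0_muley ?lte_fin.
Qed.

Lemma cont_Gabs (a : R) : continuous (fun y : R => expR (- (a * `|y|)))%R.
Proof.
move=> z; apply: continuous_comp; last exact: continuous_expR.
apply: (@continuousN _ R^o); apply: continuousM => //; first exact: cst_continuous.
exact: norm_continuous.
Qed.

Lemma cont_Gabs_c (a c : R) : continuous (fun y : R => expR (- (a * `|y - c|)))%R.
Proof.
move=> z; apply: continuous_comp; last exact: continuous_expR.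
apply: (@continuousN _ R^o); apply: continuousM => //; first exact: cst_continuous.
apply: continuous_comp; last exact: norm_continuous.
by apply: continuousB => //; exact: cst_continuous.
Qed.

Lemma int_exp_abs (a c : R) : (0 < a)%R ->
  \int[mu]_(x in [set: R]) (expR (- (a * `|x - c|)))%:E = (2 / a)%:E.
Proof.
move=> a0.
set G := fun y : R => expR (- (a * `|y|)).
have dF : (fun x : R => (x - c)%R)^`()%classic = cst 1%R.
  apply/funext => x; rewrite derive1E deriveB // derive_id derive_cst subr0 //.
transitivity (\int[mu]_(x in [set: R]) (G x)%:E).
  rewrite [RHS](@increasing_ge0_integration_by_substitutionT _ (fun x : R => (x - c)%R)).
  - by apply: eq_integral => x _; rewrite dF /= mulr1.
  - by move=> x y xy; rewrite ltrD2r.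
  - by rewrite dF; exact: cst_continuous.
  - by rewrite dF; apply/cvg_ex; exists 1%R; exact: cvg_cst.
  - by rewrite dF; apply/cvg_ex; exists 1%R; exact: cvg_cst.
  - by move=> x; apply: derivableB.
  - exact: cvg_addrr_Ny.
  - exact: cvg_addrr.
  - exact: cont_Gabs.
  - by move=> x; exact: expR_ge0.
rewrite ge0_symfun_integralT; last 3 first.
- by move=> x; exact: expR_ge0.
- exact: cont_Gabs.
- by move=> x; rewrite /G /= normrN.
rewrite -set_itvcy.
rewrite [X in _ * X](_ : _ = (a^-1)%:E); first by rewrite -EFinM mulr_natl.
rewrite -(@int_exp_half a a0); apply: eq_integral => x.
by rewrite inE /= in_itv /= andbT => x0; rewrite /G ger0_norm.
Qed.

Lemma int_indic_itv (a b : R) : (a <= b)%R ->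
  \int[mu]_(x in [set: R]) (\1_(`[a, b]%classic : set R) x)%:E = (b - a)%:E.
Proof.
move=> ab; rewrite integral_indic // setIT. apply: (eq_trans (@lebesgue_measure_itv R `[a, b]%R)) => /=.
rewrite lte_fin; case: ltP => [_|ba]; first by rewrite EFinB.
have -> : b = a by apply/eqP; rewrite eq_le ba ab.
by rewrite subrr.
Qed.
End MeasB.

Theorem lemma5p6 (R : realType) (n : nat) (Phi : seq 'rV[R]_n)
  (alpha : 'I_n -> 'rV[R]_n) (omega : 'I_n -> 'rV[R]_n) (kk : 'I_n -> R) (k : R) :
  (0 < n)%N ->
  is_root_system Phi ->
  is_base Phi alpha ->
  (forall i j, dotv (alpha i) (omega j) = (i == j)%:R) ->
  rho_sum Phi alpha = \sum_(i < n) kk i *: alpha i ->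
  (forall i, k <= kk i / eucl_norm (omega i)) ->
  (exists i, k = kk i / eucl_norm (omega i)) ->
  exists C1 C2 : R, 0 < C1 /\ 0 < C2 /\
    forall z : R, 0 < z ->
      ((C1 * expR (- (k * z)))%:E <= tail_integral Phi alpha z)%E /\
      (tail_integral Phi alpha z <= (C2 * expR (- (k * z)))%:E)%E.
Proof.
move=> n0 hPhi hbase dual hrho hk [i0 hi0].
have [halpha unitA hcoords] := hbase.
have [uniqPhi _ _ _ _] := hPhi.
have kk_pos : forall i, 1 <= kk i.
  move=> i.
  have e1 : dotv (rho_sum Phi alpha) (omega i) = kk i.
    rewrite (@rho_dot _ _ _ _ _ hrho); under eq_bigr => j _ do rewrite dual.
    exact: sum_delta.
  rewrite -e1 /rho_sum dotv_suml (big_rem (alpha i)) ?halpha //.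
  have posi : positive_root alpha (alpha i).
    by apply/forallP => j; rewrite (@coords_dot _ _ _ _ dual unitA) dual; case: (i == j).
  rewrite posi dual eqxx lerDl.
  by apply: sumr_ge0 => b /forallP pb; rewrite -(@coords_dot _ _ _ _ dual unitA); exact: pb.
have kpos : 0 < k.
  rewrite hi0; apply: divr_gt0; first exact: lt_le_trans ltr01 (kk_pos i0).
  exact: (@omega_neq0 _ _ _ _ dual i0).
have [x0 [C hlow]] := @lower_pt _ _ _ _ dual _ _ _ hrho _ hi0.
pose eps := k * (1 - @gg R n omega) / 5.
have eps0 : 0 < eps.
  apply: divr_gt0 => //; apply: mulr_gt0 => //.
  by rewrite subr_gt0; exact: (@gg_lt1 _ _ _ _ dual).
have nR0 : (0 : R) < n%:R by rewrite ltr0n.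
pose b := 2 / (eps / n%:R).
have b0 : 0 < b by apply: divr_gt0 => //; exact: divr_gt0.
exists (expR (- C) * 2 ^+ n), (n%:R * b ^+ n).
split; first by apply: mulr_gt0; [exact: expR_gt0 | exact: exprn_gt0].
split; first by apply: mulr_gt0 => //; exact: exprn_gt0.
have o0 : (0 : 'I_1) = ord0 by [].
move=> z z0; split.
- pose I m := (`[x0 z 0 m - 1, x0 z 0 m + 1]%classic : set R).
  have eqL : iter_integral (fun x : 'rV[R]_n => (\sum_(i < 1) expR (- (k * z + C)) *
      \prod_(m < n) (\1_(I m) (x ord0 m) : R))%:E)
      = ((expR (- C) * 2 ^+ n) * expR (- (k * z)))%:E.
    rewrite (@iter_prod R n 1 (fun _ => expR (- (k * z + C))) (fun _ m y => \1_(I m) y) (fun _ _ => 2)).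
    - congr EFin; rewrite big_ord1 prodr_const card_ord opprD expRD.
      by ring.
    - by move=> _; exact: expR_ge0.
    - by move=> _ m y; rewrite indicE; case: (_ \in _).
    - by move=> _ m; apply: measurable_indic; rewrite /I; exact: measurable_itv.
    - move=> _ m; rewrite /I int_indic_itv; last by rewrite lerD2l; lra.
      by congr EFin; ring.
  rewrite -eqL; apply: iter_mono.
  - move=> x; rewrite lee_fin; apply: sumr_ge0 => i _; apply: mulr_ge0; first exact: expR_ge0.
    by apply: prodr_ge0 => m _; rewrite indicE; case: (_ \in _).
  - move=> x; rewrite big_ord1.
    have [allin|] := boolP [forall m, `|x 0 m - x0 z 0 m| <= 1].
      have hx : forall m, `|x 0 m - x0 z 0 m| <= 1 by move=> m; exact: (forallP allin m).
      have [hc hn hr] := hlow z x z0 hx.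
      have -> : \prod_(m < n) (\1_(I m) (x ord0 m) : R) = 1.
        apply: big1 => m _; rewrite indicE /I.
        have := hx m; rewrite ler_norml => /andP[h1 h2].
        rewrite (_ : (x ord0 m \in _) = true) //.
        apply/mem_set; rewrite /= in_itv /=; apply/andP; split; lra.
      rewrite mulr1 asboolT; last by split.
      by rewrite lee_fin ler_expR; lra.
    rewrite negb_forall => /existsP [m hm].
    rewrite (bigD1 m) //= indicE (_ : (x ord0 m \in _) = false) ?mul0r ?mulr0.
      by case: asboolP => _; rewrite ?lee_fin ?expR_ge0.
    apply/negP => /set_mem; rewrite /I /= in_itv /= => /andP[h1 h2].
    by move: hm; rewrite ler_norml; apply/negP/negPn; apply/andP; split; lra.
- pose e i := @ee R n omega i.
  pose c := eps / n%:R.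
  have c0 : 0 < c by exact: divr_gt0.
  pose g (x : 'rV[R]_n) := (\sum_(i < n) expR (- (k * z)) *
      \prod_(m < n) expR (- (c * `|x ord0 m - z * e i 0 m|)))%:E.
  have eqU : iter_integral g = ((n%:R * b ^+ n) * expR (- (k * z)))%:E.
    rewrite (@iter_prod R n n (fun _ => expR (- (k * z)))
       (fun i m y => expR (- (c * `|y - z * e i 0 m|))) (fun _ _ => b)).
    - congr EFin; rewrite prodr_const card_ord sumr_const card_ord.
      by rewrite -mulr_natl; ring.
    - by move=> _; exact: expR_ge0.
    - by move=> i m y; exact: expR_ge0.
    - move=> i m; apply: continuous_measurable_fun; exact: cont_Gabs_c.
    - by move=> i m; rewrite int_exp_abs.
  rewrite -eqU; apply: iter_mono.
  - by move=> x; case: asboolP => _; rewrite ?lee_fin ?expR_ge0.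
  - move=> x; case: asboolP => [[hc hn]|_]; last first.
      rewrite lee_fin; apply: sumr_ge0 => i _; apply: mulr_ge0; first exact: expR_ge0.
      by apply: prodr_ge0 => m _; exact: expR_ge0.
    have [i hi] := @upper_pt _ _ _ _ dual unitA _ _ _ hrho hk kpos n0 x z hc hn.
    rewrite lee_fin.
    apply: (@le_trans _ _ (expR (- (k * z)) *
      \prod_(m < n) expR (- (c * `|x ord0 m - z * e i 0 m|)))); last first.
      rewrite [X in _ <= X](bigD1 i) //= lerDl; apply: sumr_ge0 => j _; apply: mulr_ge0; first exact: expR_ge0.
      by apply: prodr_ge0 => m _; exact: expR_ge0.
    rewrite -expR_sum -expRD ler_expR.
    have hs := @sum_coord_le R n (x - z *: e i).
    have hsum : \sum_(m < n) - (c * `|x ord0 m - z * e i 0 m|)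
        = - (c * \sum_(m < n) `|(x - z *: e i) 0 m|).
      rewrite sumrN mulr_sumr; congr (- _); apply: eq_bigr => m _.
      by rewrite !mxE.
    rewrite hsum.
    have N0 := @norm_ge0 R n (x - z *: e i).
    have h1 : c * \sum_(m < n) `|(x - z *: e i) 0 m| <= eps * eucl_norm (x - z *: e i).
      apply: le_trans (ler_wpM2l (ltW c0) hs) _.
      by rewrite /c mulrA divfK // lt0r_neq0.
    have : eps * eucl_norm (x - z *: e i) <= dotv (rho_sum Phi alpha) x - k * z by exact: hi.
    lra.
Qed.
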